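(* Let $p$ be an odd prime. If $A,B\subseteq\mathbb{F}_p$ satisfy $A+B=P_p$ and $|A|=|B|$, then $$\sqrt{\varphi(p-1)}\le |A|<\sqrt{p}.$$
   Context: $\mathbb{F}_p$ is the finite field with $p$ elements. $P_p$ denotes the set of primitive elements of $\mathbb{F}_p$, i.e. the generators of the cyclic group $\mathbb{F}_p^{\times}$. For $A,B\subseteq\mathbb{F}_p$, $A+B=\{a+b: a\in A,\ b\in B\}$. $\varphi$ is Euler's totient function. *)

(* Defs.v *)
From mathcomp Require Import all_boot all_order all_algebra.
Set Implicit Arguments. Unset Strict Implicit. Unset Printing Implicit Defensive.
Import GRing.Theory.
Local Open Scope ring_scope.

Definition sumset (V : finZmodType) (A B : {set V}) : {set V} :=
  [set a + b | a in A, b in B].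

(* P_p: primitive elements of F_p, i.e. generators of F_p^x,
   i.e. primitive (p-1)-th roots of unity. *)
Definition primitive_elems (p : nat) : {set 'F_p} :=
  [set x : 'F_p | (p.-1).-primitive_root x].

(* Main.v *)
Require Import Defs.
From mathcomp Require Import all_boot all_order all_algebra all_fingroup all_solvable all_field.
From mathcomp Require Import zify ring.
Set Implicit Arguments. Unset Strict Implicit. Unset Printing Implicit Defensive.
Import Order.TTheory GRing.Theory Num.Theory.
Local Open Scope ring_scope.

Lemma Fp_exp_pm1 (p : nat) (x : 'F_p) : prime p -> x != 0 -> x ^+ p.-1 = 1.
Proof.
move=> pp x0; have := expf_card x.
have e : #|'F_p| = (p.-1).+1 by rewrite card_Fp // prednK // prime_gt0.
rewrite e exprS => /eqP; rewrite -subr_eq0 -[X in _ - X](mulr1 x) -mulrBr mulf_eq0.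
by rewrite (negPf x0) subr_eq0 => /eqP.
Qed.

Lemma Fp_half_pm1 (p : nat) (x : 'F_p) : prime p -> odd p -> x != 0 ->
  (x ^+ (p.-1)./2 == 1) || (x ^+ (p.-1)./2 == -1).
Proof.
move=> pp op x0; rewrite -sqrf_eq1 -exprM.
have -> : ((p.-1)./2 * 2 = p.-1)%N.
  by rewrite muln2 even_halfK // -oddS prednK ?prime_gt0.
by rewrite Fp_exp_pm1.
Qed.

Lemma Fp_one_neq_m1 (p : nat) : prime p -> odd p -> (1 : 'F_p) != -1.
Proof.
move=> pp op; rewrite -subr_eq0 opprK.
have -> : (1 + 1 : 'F_p) = 2%:R by [].
rewrite -(dvdn_pcharf (pchar_Fp pp)).
apply/negP => /(dvdn_leq (isT : (0 < 2)%N)); move: (prime_gt1 pp) op.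
case: p pp => [|[|[|q]]] //.
Qed.

Definition chi (p : nat) (x : 'F_p) : int :=
  if x == 0 then 0 else if x ^+ (p.-1)./2 == 1 then 1 else -1.

Lemma chiM (p : nat) (x y : 'F_p) : prime p -> odd p -> chi (x * y) = chi x * chi y.
Proof.
move=> pp op; rewrite /chi mulf_eq0.
have n1 := Fp_one_neq_m1 pp op.
have n1' : (-1 : 'F_p) != 1 by rewrite eq_sym.
case: (eqVneq x 0) => [->|x0] /=; first by rewrite ?eqxx ?mul0r.
case: (eqVneq y 0) => [_|y0] /=; first by rewrite ?mulr0.
rewrite exprMn.
case/orP: (Fp_half_pm1 pp op x0) => /eqP ->; case/orP: (Fp_half_pm1 pp op y0) => /eqP ->;
  rewrite ?mulr1 ?mul1r ?mulrNN ?mulr1 ?eqxx ?(negPf n1') //.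
Qed.

Lemma chi_sq (p : nat) (x : 'F_p) : x != 0 -> chi x * chi x = 1.
Proof. by rewrite /chi => /negPf ->; case: ifP. Qed.

Lemma chi0 (p : nat) : chi (0 : 'F_p) = 0.
Proof. by rewrite /chi eqxx. Qed.

Lemma chi1 (p : nat) : prime p -> chi (1 : 'F_p) = 1.
Proof. by move=> pp; rewrite /chi oner_eq0 expr1n eqxx. Qed.

Lemma Fp_prim_exists (p : nat) : prime p -> exists z : 'F_p, (p.-1).-primitive_root z.
Proof.
move=> pp.
have : has (p.-1).-primitive_root (enum (predC1 (0 : 'F_p))).
  apply: has_prim_root.
  - by rewrite -ltnS prednK ?prime_gt0 // prime_gt1.
  - apply/allP => x; rewrite mem_enum /= => x0.
    by rewrite unity_rootE Fp_exp_pm1.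
  - exact: enum_uniq.
  - by rewrite -cardE cardC1 card_Fp.
by case/hasP => z _ hz; exists z.
Qed.

Lemma chi_prim (p : nat) (z : 'F_p) : prime p -> odd p -> (p.-1).-primitive_root z -> chi z = -1.
Proof.
move=> pp op hz; rewrite /chi (prim_root_eq0 hz).
have p3 : (2 < p)%N by move: (prime_gt1 pp) op; case: p {z hz pp} => [|[|[|q]]].
have -> : (p.-1 == 0)%N = false by lia.
rewrite -(prim_order_dvd hz).
have e : ((p.-1)./2).*2 = p.-1 by rewrite even_halfK // -oddS prednK ?prime_gt0.
set h := (p.-1)./2 in e *.
have h0 : (0 < h)%N by lia.
case: ifP => // /(dvdn_leq h0); lia.
Qed.

Lemma chi_sum0 (p : nat) : prime p -> odd p -> \sum_(x : 'F_p) chi x = 0.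
Proof.
move=> pp op; have [z hz] := Fp_prim_exists pp.
have z0 : z != 0 by rewrite (prim_root_eq0 hz); move: (prime_gt1 pp); lia.
have E : \sum_(x : 'F_p) chi x = \sum_(x : 'F_p) chi (z * x) by apply: reindex_inj (mulfI z0).
move: E.
under [X in _ = X -> _]eq_bigr => x _ do rewrite chiM // (chi_prim pp op hz).
rewrite -mulr_sumr; set S := \sum__ _; lia.
Qed.

Lemma chi_pair (p : nat) (c : 'F_p) : prime p -> odd p -> c != 0 ->
  \sum_(y : 'F_p) chi (y * (y + c)) = -1.
Proof.
move=> pp op c0.
have E : \sum_(y : 'F_p) chi y = \sum_(y : 'F_p) chi (1 + c * y^-1).
  by apply: reindex_inj => a b /addrI /(mulfI c0) /invr_inj.
rewrite chi_sum0 // (bigD1 0) //= invr0 mulr0 addr0 chi1 // in E.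
rewrite (bigD1 0) //= mul0r chi0 add0r.
have -> : \sum_(y | y != 0) chi (y * (y + c)) = \sum_(y | y != 0) chi (1 + c * y^-1).
  apply: eq_bigr => y y0.
  have -> : y * (y + c) = (y * y) * (1 + c * y^-1) by field.
  by rewrite !chiM // chi_sq // mul1r.
move: E; set X := \sum_(_ | _) _; lia.
Qed.

Lemma sum_shift (p : nat) (b : 'F_p) (f : 'F_p -> int) :
  \sum_(x : 'F_p) f (x + b) = \sum_(x : 'F_p) f x.
Proof. by rewrite [RHS](reindex_inj (can_inj (addrK b))). Qed.

Lemma chi_diag (p : nat) (b : 'F_p) : prime p ->
  \sum_(x : 'F_p) chi (x + b) * chi (x + b) = (p.-1)%:R.
Proof.
move=> pp; rewrite (sum_shift b (fun x => chi x * chi x)) (bigD1 0) //= chi0 mul0r add0r.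
rewrite (eq_bigr (fun _ => 1)); last by move=> x x0; rewrite chi_sq.
rewrite sumr_const; congr (_%:R).
transitivity #|predC1 (0 : 'F_p)|; first by apply: eq_card => x; rewrite !inE.
by rewrite cardC1 card_Fp.
Qed.

Lemma card_prim (p : nat) : prime p -> #|primitive_elems p| = totient p.-1.
Proof.
move=> pp; have [z hz] := Fp_prim_exists pp.
set n := p.-1 in hz *.
pose f := fun k : 'I_n => z ^+ k.
have -> : primitive_elems p = f @: [set k : 'I_n | coprime k n].
  apply/setP => x; rewrite !inE; apply/idP/imsetP.
  - move=> hx; have [i ex] := prim_rootP hz (prim_expr_order hx).
    exists i; last exact: ex.
    by rewrite inE -(prim_root_exp_coprime _ hz) -ex.
  - by case=> k; rewrite inE => hk ->; rewrite /f prim_root_exp_coprime.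
rewrite card_imset; last first.
  move=> i j /eqP; rewrite /f (eq_prim_root_expr hz) !modn_small // => /eqP.
  exact: val_inj.
rewrite totient_count_coprime big_mkord -sum1_card big_mkcond /=.
by apply: eq_bigr => i _; rewrite inE coprime_sym; case: coprime.
Qed.

Lemma chi_offdiag (p : nat) (b b' : 'F_p) : prime p -> odd p -> b' != b ->
  \sum_(x : 'F_p) chi (x + b) * chi (x + b') = -1.
Proof.
move=> pp op nb.
have c0 : b' - b != 0 by rewrite subr_eq0.
rewrite (eq_bigr (fun x => chi ((x + b) * ((x + b) + (b' - b))))); last first.
  by move=> x _; rewrite -chiM //; congr chi; ring.
by rewrite (sum_shift b (fun y => chi (y * (y + (b' - b))))) chi_pair.
Qed.

Lemma upper (p : nat) (A B : {set 'F_p}) :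
  prime p -> odd p ->
  sumset A B = primitive_elems p -> #|A| = #|B| -> (#|A| ^ 2 < p)%N.
Proof.
move=> pp op hS hAB.
case: (posnP #|B|) => [n0|npos].
  by rewrite hAB n0 prime_gt0.
set n := #|B| in hAB npos.
pose S := \sum_(x : 'F_p) (\sum_(b in B) chi (x + b)) ^+ 2.
have S1 : S = n%:R * ((p.-1)%:R - (n.-1)%:R).
  rewrite /S.
  under eq_bigr => x _ do rewrite expr2 mulr_suml; rewrite exchange_big /=.
  under eq_bigr => b _ do (under eq_bigr => x _ do rewrite mulr_sumr; rewrite exchange_big /=).
  rewrite (eq_bigr (fun _ => (p.-1)%:R - (n.-1)%:R)); last first.
    move=> b bB.
    rewrite (bigD1 b) //= chi_diag //.
    rewrite (eq_bigr (fun _ => -1)); last first.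
      by move=> b' /andP[_ nb]; apply: chi_offdiag.
    rewrite sumr_const.
    have cb : #|[pred b' | (b' \in B) && (b' != b)]| = n.-1.
      rewrite /n (cardD1 b B) bB add1n /=; apply: eq_card => x; by rewrite !inE andbC.
    by rewrite cb -mulNrn.
  by rewrite sumr_const mulr_natl.
have S2 : (#|A| * n ^ 2)%:R <= S :> int.
  rewrite /S (bigID (mem A)) /=.
  apply: (@le_trans _ _ (\sum_(i | i \in A) (\sum_(b in B) chi (i + b)) ^+ 2)).
    rewrite -sum1_card big_distrl /= natr_sum ler_sum // => x xA.
    rewrite (eq_bigr (fun _ => -1)); last first.
      move=> b bB; apply: chi_prim => //.
      have : x + b \in sumset A B by apply/imset2P; exists x b.
      by rewrite hS inE.
    by rewrite sumr_const mulNrn sqrrN mul1n natrX.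
  by rewrite lerDl sumr_ge0 // => i _; rewrite sqr_ge0.
move: S2; rewrite S1 hAB.
have e1 : (p.-1).+1 = p by rewrite prednK // prime_gt0.
have e2 : (n.-1).+1 = n by rewrite prednK.
rewrite -e1 -[in X in _ -> X]e1 -e2.
move: (n.-1) (p.-1) => m q {e1 e2}.
rewrite /=; nia.
Qed.

Theorem theorem1p3 (p : nat) (A B : {set 'F_p}) :
  prime p -> odd p ->
  sumset A B = primitive_elems p -> #|A| = #|B| ->
  (totient p.-1 <= #|A| ^ 2 /\ #|A| ^ 2 < p)%N.
Proof.
move=> pp op hS hAB; split; last exact: upper hS hAB.
rewrite -card_prim // -hS /sumset curry_imset2X.
apply: (leq_trans (leq_imset_card _ _)).
by rewrite cardsX -hAB.
Qed.
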